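(* Let $\beta=0$, $R\ge0$, $D>0$, and let $\alpha_\infty^D$ be the maximum value of $\alpha_0$ over all numerical walls for the Chern character $(-R,0,D,0)$ on $\mathbb{P}^3$. Then $D-2<\alpha_\infty^D\le D$.
   Context: On $\mathbb{P}^3$ with hyperplane class $H$, Chern characters are the vectors of coefficients of $1,H,H^2,H^3$. For the Chern character $v=(-R,0,D,0)$ and the Bayer–Macrì–Toda stability conditions $\sigma_{0,\alpha,s}$ ($\alpha,s>0$; central charge $Z=-(\operatorname{ch}_3-(s+\frac16)\alpha^2\operatorname{ch}_1)+\sqrt{-1}(\operatorname{ch}_2-\frac{\alpha^2}{2}\operatorname{ch}_0)$), a numerical wall is a curve $(s+\frac16)\alpha^2=\alpha_0^2/6$ with $\alpha_0^2=6e/c$, where $(r,c,d,e)=\operatorname{ch}(A)$ for some $A\in D^b(\mathbb{P}^3)$ with $c>0$ satisfying $0<d<D$, $0<c(6e)\le\min\{4d^2,4(D-d)^2\}$, and $-\frac{c(2D-2d)}{6e}-R\le r\le\frac{2cd}{6e}$. (Being the Chern character of an object forces in particular $r,c\in\mathbb{Z}$, $d-\frac{c^2}{2}\in\mathbb{Z}$, $2e-cd+\frac{c^3}{6}\in\mathbb{Z}$, $e-\frac c6\in\mathbb{Z}$.) *)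

(* Defs.v *)
From Stdlib Require Import Reals ZArith.
Open Scope R_scope.

(* Chern character of O(k) on P^3: (1, k, k^2/2, k^3/6). *)
(* Since K_0(P^3) is generated by the line bundles O, O(1), O(2),
   O(3) (Beilinson), the image of ch is the Z-span of ch(O(k)), k=0..3. *)
Definition is_ch (r c d e : R) : Prop :=
  exists a0 a1 a2 a3 : Z,
    r = IZR a0 + IZR a1 + IZR a2 + IZR a3 /\
    c = IZR a1 + 2 * IZR a2 + 3 * IZR a3 /\
    d = IZR a1 / 2 + IZR a2 * 4 / 2 + IZR a3 * 9 / 2 /\
    e = IZR a1 / 6 + IZR a2 * 8 / 6 + IZR a3 * 27 / 6.

Definition numerical_wall (Rk D : R) (r c d e : R) : Prop :=
  is_ch r c d e /\
  0 < c /\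
  0 < d < D /\
  0 < c * (6 * e) <= Rmin (4 * d ^ 2) (4 * (D - d) ^ 2) /\
  - (c * (2 * D - 2 * d)) / (6 * e) - Rk <= r <= 2 * c * d / (6 * e).

Definition wall_alpha0 (c e : R) : R := sqrt (6 * e / c).

(* Main.v *)
Require Import Defs.
From Stdlib Require Import Reals ZArith.
From Stdlib Require Import Lra Lia Psatz List Classical.
Open Scope R_scope.

Lemma list_max {A : Type} (L : list A) (P : A -> Prop) (f : A -> R) :
  (exists x, In x L /\ P x) ->
  exists x, In x L /\ P x /\ forall y, In y L -> P y -> f y <= f x.
Proof.
  induction L as [|a L IH]; intros [x [Hx Px]].
  - destruct Hx.
  - destruct (classic (exists x, In x L /\ P x)) as [H|H].
    + destruct (IH H) as [m [Hm [Pm Mm]]].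
      destruct (classic (P a)) as [Pa|Pa].
      * destruct (Rle_dec (f a) (f m)).
        -- exists m; split; [right; exact Hm|split; [exact Pm|]].
           intros y [<-|Hy] Py; [lra| apply Mm; auto].
        -- exists a; split; [left; reflexivity|split; [exact Pa|]].
           intros y [<-|Hy] Py; [lra|]. specialize (Mm y Hy Py). lra.
      * exists m; split; [right; exact Hm|split; [exact Pm|]].
        intros y [<-|Hy] Py; [contradiction| apply Mm; auto].
    + destruct Hx as [<-|Hx]; [|exfalso; apply H; eauto].
      exists a; split; [left; reflexivity|split; [exact Px|]].
      intros y [<-|Hy] Py; [lra|exfalso; apply H; eauto].
Qed.

Lemma Rdiv_le_0_compat (a b : R) : 0 <= a -> 0 < b -> 0 <= a / b.
Proof. intros. unfold Rdiv. apply Rmult_le_pos; [lra|apply Rlt_le, Rinv_0_lt_compat; lra]. Qed.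

Lemma IZR_INR (z : Z) : (0 <= z)%Z -> IZR z = INR (Z.to_nat z).
Proof. intros. rewrite INR_IZR_INZ, Z2Nat.id; auto. Qed.

Lemma wall_bound (Rk D : R) (z : Z) r c d e :
  D = IZR z -> numerical_wall Rk D r c d e ->
  exists c' E' : nat, (1 <= c' <= Z.to_nat (z*z))%nat /\ (1 <= E' <= Z.to_nat (z*z))%nat
    /\ c = INR c' /\ 6 * e = INR E' /\ sqrt (6 * e / c) <= D.
Proof.
  intros HD [[b0 [b1 [b2 [b3 [Hr [Hc [Hd He]]]]]]] [Hc0 [[Hd0 HdD] [[Hce0 Hce] _]]]].
  assert (Hzc : c = IZR (b1 + 2*b2 + 3*b3)) by
    (rewrite !plus_IZR, !mult_IZR; lra).
  assert (Hze : 6*e = IZR (b1 + 8*b2 + 27*b3)) by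
    (rewrite !plus_IZR, !mult_IZR; lra).
  set (zc := (b1 + 2*b2 + 3*b3)%Z) in *.
  set (ze := (b1 + 8*b2 + 27*b3)%Z) in *.
  assert (HceD : c * (6*e) <= D^2).
  { eapply Rle_trans; [exact Hce|].
    destruct (Rle_dec d (D/2)).
    - eapply Rle_trans; [apply Rmin_l|]. nra.
    - eapply Rle_trans; [apply Rmin_r|]. nra. }
  assert (He0 : 0 < 6*e).
  { destruct (Rle_dec (6*e) 0); [|lra]. nra. }
  rewrite Hzc in Hc0. apply lt_IZR in Hc0.
  rewrite Hze in He0. apply lt_IZR in He0.
  assert (Hprod : (zc * ze <= z*z)%Z).
  { apply le_IZR. rewrite !mult_IZR, <- Hzc, <- Hze, <- HD. lra. }
  exists (Z.to_nat zc), (Z.to_nat ze).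
  split; [nia|]. split; [nia|].
  split; [rewrite Hzc; apply IZR_INR; lia|].
  split; [rewrite Hze; apply IZR_INR; lia|].
  assert (Hc1 : 1 <= c) by (rewrite Hzc; apply IZR_le; lia).
  assert (Hx : 6*e/c <= D^2).
  { assert (Hxc : 6*e/c * c = 6*e) by (field; lra).
    assert (He1 : 1 <= 6*e) by (rewrite Hze; apply IZR_le; lia).
    assert (0 <= 6*e/c) by (apply Rdiv_le_0_compat; lra).
    nra. }
  assert (0 <= D) by (apply Rlt_le, Rlt_trans with d; lra).
  rewrite <- (sqrt_pow2 D) by lra.
  apply sqrt_le_1_alt; exact Hx.
Qed.

Lemma good_wall (Rk : R) (z : Z) :
  0 <= Rk -> (1 <= z)%Z ->
  exists r c d e, numerical_wall Rk (IZR z) r c d e /\ IZR z - 2 < wall_alpha0 c e.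
Proof.
  intros HR Hz.
  set (p := ((z - 1) / 2)%Z).
  set (q := (2 * p * (p + 1) / 3)%Z).
  assert (Hp : (0 <= p /\ 2*p+1 <= z <= 2*p+2)%Z) by (unfold p; Z.div_mod_to_equations; lia).
  assert (Hq : (0 <= q /\ 3*q <= 2*p*(p+1) < 3*q+3)%Z) by (unfold q; Z.div_mod_to_equations; nia).
  set (a3 := (q - p)%Z). set (a2 := (p - 3*a3)%Z). set (a1 := (1 - 2*a2 - 3*a3)%Z).
  set (a0 := (- (a1 + a2 + a3))%Z).
  exists 0, 1, (IZR p + 1/2), (IZR (1 + 6*q) / 6).
  assert (HE : 1 <= IZR (1 + 6*q)) by (apply IZR_le; lia).
  assert (HE2 : IZR (1 + 6*q) <= (2*IZR p + 1)^2).
  { replace ((2*IZR p + 1)^2) with (IZR ((2*p+1)*(2*p+1))) by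
      (repeat rewrite ?mult_IZR, ?plus_IZR; ring).
    apply IZR_le; nia. }
  assert (Hz1 : 2*IZR p + 1 <= IZR z) by
    (replace (2*IZR p + 1) with (IZR (2*p+1)) by (repeat rewrite ?mult_IZR, ?plus_IZR; ring);
     apply IZR_le; lia).
  assert (Hp0 : 0 <= IZR p) by (apply IZR_le; lia).
  split; [split; [|split; [lra|split; [lra|split; [split|]]]]|].
  - exists a0, a1, a2, a3.
    unfold a0, a1, a2, a3.
    rewrite ?opp_IZR, ?minus_IZR, ?plus_IZR, ?mult_IZR, ?opp_IZR, ?minus_IZR, ?plus_IZR, ?mult_IZR.
    repeat rewrite ?opp_IZR, ?minus_IZR, ?plus_IZR, ?mult_IZR. repeat split; field.
  - replace (1 * (6 * (IZR (1 + 6 * q) / 6))) with (IZR (1 + 6*q)) by field. lra.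
  - replace (1 * (6 * (IZR (1 + 6 * q) / 6))) with (IZR (1 + 6*q)) by field.
    apply Rmin_glb; nra.
  - replace (6 * (IZR (1 + 6 * q) / 6)) with (IZR (1 + 6*q)) by field.
    split.
    + assert (0 <= 1 * (2 * IZR z - 2 * (IZR p + 1 / 2)) / IZR (1 + 6 * q))
        by (apply Rdiv_le_0_compat; lra).
      unfold Rdiv in *. lra.
    + apply Rdiv_le_0_compat; lra.
  - unfold wall_alpha0.
    replace (6 * (IZR (1 + 6 * q) / 6) / 1) with (IZR (1 + 6*q)) by field.
    destruct (Z_le_gt_dec z 2) as [Hz2|Hz2].
    + assert (IZR z <= 2) by (apply IZR_le; lia).
      assert (0 < sqrt (IZR (1 + 6 * q))) by (apply sqrt_lt_R0; lra).
      lra.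
    + assert (Hlt : ((z-2)*(z-2) < 1 + 6*q)%Z) by nia.
      apply IZR_lt in Hlt. repeat rewrite ?mult_IZR, ?minus_IZR in Hlt.
      assert (IZR z > 2) by (apply IZR_lt; lia).
      rewrite <- (sqrt_pow2 (IZR z - 2)) by lra.
      apply sqrt_lt_1_alt. split; [apply pow2_ge_0|]. replace ((IZR z - 2)^2) with ((IZR z-2)*(IZR z-2)) by ring; lra.
Qed.

Theorem proposition4p1 (Rk D : R) :
  is_ch (- Rk) 0 D 0 -> 0 <= Rk -> 0 < D ->
  exists alpha_inf : R,
    ((exists r c d e, numerical_wall Rk D r c d e /\ wall_alpha0 c e = alpha_inf) /\
     (forall r c d e, numerical_wall Rk D r c d e -> wall_alpha0 c e <= alpha_inf)) /\
    D - 2 < alpha_inf <= D.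
Proof.
  intros [a0 [a1 [a2 [a3 [Hr [Hc [Hd He]]]]]]] HR HD.
  assert (HDz : D = IZR (a2 + 3*a3)) by (rewrite plus_IZR, mult_IZR; lra).
  set (z := (a2 + 3*a3)%Z) in *.
  assert (Hz : (1 <= z)%Z) by (rewrite HDz in HD; apply lt_IZR in HD; lia).
  set (N := Z.to_nat (z*z)).
  set (L := list_prod (seq 1 N) (seq 1 N)).
  set (P := fun ce : nat * nat => exists r d e,
             numerical_wall Rk D r (INR (fst ce)) d e /\ 6 * e = INR (snd ce)).
  set (f := fun ce : nat * nat => sqrt (INR (snd ce) / INR (fst ce))).
  assert (Hin : forall r c d e, numerical_wall Rk D r c d e ->
     exists ce, In ce L /\ P ce /\ wall_alpha0 c e = f ce /\ wall_alpha0 c e <= D).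
  { intros r c d e W.
    destruct (wall_bound Rk D z r c d e HDz W) as [c' [E' [Hc' [HE' [Hcc [Hee Hb]]]]]].
    exists (c', E'). split; [|split; [|split]].
    - apply in_prod; apply in_seq; unfold N; lia.
    - exists r, d, e. simpl. rewrite <- Hcc. auto.
    - unfold wall_alpha0, f; simpl. rewrite <- Hcc, <- Hee. reflexivity.
    - exact Hb. }
  destruct (good_wall Rk z HR Hz) as [r0 [c0 [d0 [e0 [W0 G0]]]]].
  rewrite <- HDz in W0, G0.
  destruct (Hin _ _ _ _ W0) as [ce0 [Hce0 [Pce0 [Fce0 _]]]].
  destruct (list_max L P f (ex_intro _ ce0 (conj Hce0 Pce0))) as [m [Hm [Pm Mm]]].
  exists (f m).
  destruct Pm as [rm [dm [em [Wm Em]]]].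
  destruct (Hin _ _ _ _ Wm) as [cem [_ [_ [Fm Bm]]]].
  assert (Fm' : wall_alpha0 (INR (fst m)) em = f m)
    by (unfold wall_alpha0, f; rewrite Em; reflexivity).
  split; [split|split].
  - exists rm, (INR (fst m)), dm, em. auto.
  - intros r c d e W.
    destruct (Hin _ _ _ _ W) as [ce [Hce [Pce [Fce _]]]].
    rewrite Fce. apply Mm; auto.
  - specialize (Mm ce0 Hce0 Pce0). lra.
  - lra.
Qed.
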